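(* Let $S\in\mathbb{R}^{n\times n}$ and $D\in\mathbb{R}^{r\times r}$ be real diagonal matrices and let $X\in\mathbb{R}^{n\times r}$ be such that $X^{T}X$ is diagonal and $SX=X(D+X^{T}X)$. Then there exists a scaled permutation $Y\in\mathbb{R}^{n\times r}$ such that $SY=Y(D+Y^{T}Y)$, $Y^{T}Y=X^{T}X$, and $\langle S,YY^{T}\rangle=\langle S,XX^{T}\rangle$.
   Context: A matrix is a scaled permutation if it has at most one nonzero entry in each column and at most one nonzero entry in each row. $\langle A,B\rangle=\mathrm{tr}(A^{T}B)$. *)

(* Defs.v *)
From mathcomp Require Import all_boot all_order all_algebra.
From mathcomp Require Import reals.
Set Implicit Arguments. Unset Strict Implicit. Unset Printing Implicit Defensive.
Import Order.TTheory GRing.Theory Num.Theory.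
Local Open Scope ring_scope.

Definition frob_inner (R : pzRingType) (m n : nat) (A B : 'M[R]_(m, n)) : R :=
  \tr (A^T *m B).

Definition scaled_perm (R : pzRingType) (m n : nat) (A : 'M[R]_(m, n)) : Prop :=
  (forall j : 'I_n, forall i1 i2 : 'I_m, A i1 j != 0 -> A i2 j != 0 -> i1 = i2) /\
  (forall i : 'I_m, forall j1 j2 : 'I_n, A i j1 != 0 -> A i j2 != 0 -> j1 = j2).

(* Main.v *)
Require Import Defs.
From mathcomp Require Import all_boot all_order all_algebra.
From mathcomp Require Import reals.
Import Order.TTheory GRing.Theory Num.Theory.
Local Open Scope ring_scope.
Set Implicit Arguments. Unset Strict Implicit.

Lemma diag_mul_l (R : pzRingType) m p (A : 'M[R]_m) (B : 'M[R]_(m, p)) i j :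
  is_diag_mx A -> (A *m B) i j = A i i * B i j.
Proof.
move=> /is_diag_mxP hA; rewrite mxE (bigD1 i) //= big1 ?addr0 // => k hk.
by rewrite hA ?mul0r // eq_sym.
Qed.

Lemma diag_mul_r (R : pzRingType) m p (A : 'M[R]_p) (B : 'M[R]_(m, p)) i j :
  is_diag_mx A -> (B *m A) i j = B i j * A j j.
Proof.
move=> /is_diag_mxP hA; rewrite mxE (bigD1 j) //= big1 ?addr0 // => k hk.
by rewrite hA ?mulr0.
Qed.

Section L.
Variables (R : realType) (n r : nat) (S : 'M[R]_n) (D : 'M[R]_r) (X : 'M[R]_(n,r)).
Hypotheses (hS : is_diag_mx S) (hD : is_diag_mx D) (hX : is_diag_mx (X^T *m X))
  (hE : S *m X = X *m (D + X^T *m X)).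

Definition c j := (X^T *m X) j j.
Definition lam j := D j j + c j.

Lemma c_sum j : c j = \sum_i X i j ^+ 2.
Proof. by rewrite /c mxE; apply: eq_bigr => i _; rewrite mxE expr2. Qed.

Lemma c_ge0 j : 0 <= c j.
Proof. by rewrite c_sum; apply: sumr_ge0 => i _; apply: sqr_ge0. Qed.

Lemma ex_i0 j : c j != 0 -> exists i0 : 'I_n, true.
Proof.
case: (pickP (fun i => X i j != 0)) => [i0 _|h]; first by exists i0.
rewrite c_sum big1 ?eqxx // => i _.
by move: (h i) => /= /negbFE /eqP ->; rewrite expr2 mulr0.
Qed.

Lemma eigX i j : S i i * X i j = X i j * lam j.
Proof.
have := congr1 (fun M : 'M[R]_(n, r) => M i j) hE => /=.
rewrite diag_mul_l // diag_mul_r; last first.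
  apply/is_diag_mxP => a b hab; rewrite mxE.
  by rewrite (is_diag_mxP hD) // (is_diag_mxP hX) // addr0.
by rewrite mxE.
Qed.

Lemma Xsupp i j : X i j != 0 -> S i i = lam j.
Proof.
move=> hx; have := eigX i j; rewrite [X i j * _]mulrC => /eqP.
by rewrite -subr_eq0 -mulrBl mulf_eq0 (negbTE hx) orbF subr_eq0 => /eqP.
Qed.

Definition Jset mu := [set j | (c j != 0) && (lam j == mu)].
Definition Iset mu := [set i | S i i == mu].

Lemma card_JI mu : (#|Jset mu| <= #|Iset mu|)%N.
Proof.
pose Z := \matrix_(a < #|Iset mu|, b < #|Jset mu|) X (enum_val a) (enum_val b).
have ZZ : Z^T *m Z = diag_mx (\row_b c (enum_val b)).
  apply/matrixP => b b'; rewrite !mxE.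
  have hb := enum_valP b; rewrite inE in hb; case/andP: hb => cb /eqP lb.
  transitivity ((X^T *m X) (enum_val b) (enum_val b')).
    rewrite mxE [RHS](bigID (fun i => i \in Iset mu)) /=.
    rewrite [X in _ + X]big1 ?addr0; last first.
      move=> i hi; rewrite mxE.
      case: (eqVneq (X i (enum_val b)) 0) => [->|hx]; first by rewrite mul0r.
      by move: hi; rewrite inE (Xsupp hx) lb eqxx.
    rewrite (big_enum_val (fun i => X^T (enum_val b) i * X i (enum_val b'))).
    by apply: eq_bigr => a _; rewrite !mxE.
  case: (eqVneq b b') => [<-|hbb]; first by rewrite mulr1n.
  rewrite mulr0n (is_diag_mxP hX) //.
  by apply: contra hbb => /eqP /val_inj /enum_val_inj ->.
have hu : Z^T *m Z \in unitmx.
  rewrite unitmxE ZZ det_diag unitfE; apply/prodf_neq0 => b _.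
  rewrite mxE; have := enum_valP b; rewrite inE => /andP [].
  by [].
have := mxrank_unit hu => hr.
apply: leq_trans (rank_leq_row Z).
by rewrite -{1}hr mxrankM_maxr.
Qed.

Definition tgt j (i0 : 'I_n) :=
  nth i0 (enum (Iset (lam j))) (index j (enum (Jset (lam j)))).

Lemma idx_lt j : c j != 0 ->
  (index j (enum (Jset (lam j))) < size (enum (Iset (lam j))))%N.
Proof.
move=> cj; rewrite -cardE; apply: (leq_trans _ (card_JI (lam j))).
by rewrite cardE index_mem mem_enum inE cj eqxx.
Qed.

Lemma tgt_ok j i0 i1 : c j != 0 ->
  tgt j i0 = tgt j i1 /\ tgt j i0 \in Iset (lam j).
Proof.
move=> cj; have h := idx_lt cj; split; first exact: set_nth_default.
by rewrite -mem_enum; apply: mem_nth.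
Qed.

Lemma tgt_inj j j' i0 i1 : c j != 0 -> c j' != 0 -> tgt j i0 = tgt j' i1 -> j = j'.
Proof.
move=> cj cj' e.
have [_ h1] := tgt_ok i0 i0 cj; have [_ h2] := tgt_ok i1 i1 cj'.
move: h1 h2; rewrite !inE e => /eqP -> /eqP hl.
have hj := idx_lt cj; have hj' := idx_lt cj'.
move: e hj'; rewrite /tgt -hl => e hj'.
rewrite (set_nth_default i0 i1 hj') in e.
move/eqP: e; rewrite nth_uniq ?enum_uniq // => /eqP.
have m1 : j \in enum (Jset (lam j)) by rewrite mem_enum inE cj eqxx.
have m2 : j' \in enum (Jset (lam j)) by rewrite mem_enum inE cj' hl eqxx.
move=> hh; exact: (index_inj j m1 m2 hh).
Qed.

Definition Y := \matrix_(i, j) if (c j != 0) && (i == tgt j i) then Num.sqrt (c j) else 0.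

Lemma Ynz i j : Y i j != 0 -> c j != 0 /\ forall i0, i = tgt j i0.
Proof.
rewrite mxE; case: ifP => [/andP [cj /eqP e] _|]; last by rewrite eqxx.
split => // i0; rewrite e; exact: (tgt_ok i i0 cj).1.
Qed.

Lemma Y_off i j i0 : i != tgt j i0 -> Y i j = 0.
Proof.
move=> h; apply/eqP; apply: contraNT h => /Ynz [_ e]; by rewrite -(e i0).
Qed.

Lemma Y_tgt j i0 : c j != 0 -> Y (tgt j i0) j = Num.sqrt (c j).
Proof.
move=> cj; rewrite mxE cj /= (tgt_ok (tgt j i0) i0 cj).1.
by rewrite eqxx.
Qed.

Lemma YtY : Y^T *m Y = X^T *m X.
Proof.
apply/matrixP => j j'; rewrite [LHS]mxE.
case: (eqVneq (c j) 0) => [cj0|cj].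
  rewrite big1; last by move=> i _; rewrite !mxE cj0 eqxx /= mul0r.
  case: (eqVneq j j') => [<-|hjj]; first by rewrite -/(c j) cj0.
  by rewrite (is_diag_mxP hX).
have [i0 _] := ex_i0 cj.
rewrite (bigD1 (tgt j i0)) //= big1 ?addr0; last first.
  by move=> i hi; rewrite mxE (Y_off hi) mul0r.
rewrite mxE Y_tgt //.
case: (eqVneq j j') => [<-|hjj].
  by rewrite Y_tgt // -expr2 sqr_sqrtr ?c_ge0.
rewrite (is_diag_mxP hX); last by [].
case: (eqVneq (Y (tgt j i0) j') 0) => [->|hy]; first by rewrite mulr0.
have [cj' e] := Ynz hy; have := tgt_inj cj cj' (e i0).
by move=> hh; rewrite hh eqxx in hjj.
Qed.

Lemma frob_gen (Z : 'M[R]_(n, r)) :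
  (forall i j, S i i * Z i j = Z i j * lam j) ->
  frob_inner S (Z *m Z^T) = \sum_j lam j * (Z^T *m Z) j j.
Proof.
move=> hZ; rewrite /frob_inner.
transitivity (\sum_i (S^T *m (Z *m Z^T)) i i); first by [].
rewrite (eq_bigr (fun i => \sum_j lam j * (Z i j * Z i j))); last first.
  move=> i _; rewrite diag_mul_l ?is_diag_trmx // !mxE mulr_sumr.
  by apply: eq_bigr => j _; rewrite !mxE [RHS]mulrA -[lam j * _]mulrC -hZ mulrA.
rewrite exchange_big /=; apply: eq_bigr => j _; rewrite mxE mulr_sumr.
by apply: eq_bigr => i _; rewrite mxE.
Qed.

End L.

Theorem lemma23 (R : realType) (n r : nat)
  (S : 'M[R]_n) (D : 'M[R]_r) (X : 'M[R]_(n, r)) :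
  is_diag_mx S -> is_diag_mx D -> is_diag_mx (X^T *m X) ->
  S *m X = X *m (D + X^T *m X) ->
  exists Y : 'M[R]_(n, r),
    [/\ scaled_perm Y,
        S *m Y = Y *m (D + Y^T *m Y),
        Y^T *m Y = X^T *m X &
        frob_inner S (Y *m Y^T) = frob_inner S (X *m X^T)].
Proof.
move=> hS hD hX hE.
have hYX := YtY hS hD hX hE.
have eigY : forall i j, S i i * Y S D X i j = Y S D X i j * lam D X j.
  move=> i j; case: (eqVneq (Y S D X i j) 0) => [->|hy]; first by rewrite mulr0 mul0r.
  have [cj e] := Ynz hS hD hX hE hy; have [_] := tgt_ok hS hD hX hE i i cj.
  by rewrite -e inE => /eqP ->; rewrite mulrC.
exists (Y S D X); split.
- split.
  + move=> j i1 i2 h1 h2; have [cj e1] := Ynz hS hD hX hE h1; have [_ e2] := Ynz hS hD hX hE h2.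
    by rewrite (e1 i1) (e2 i1).
  + move=> i j1 j2 h1 h2; have [c1 e1] := Ynz hS hD hX hE h1; have [c2 e2] := Ynz hS hD hX hE h2.
    by apply: (tgt_inj hS hD hX hE (i0:=i) (i1:=i) c1 c2); rewrite -(e1 i) -(e2 i).
- rewrite hYX; apply/matrixP => i j.
  rewrite diag_mul_l // diag_mul_r; last first.
    apply/is_diag_mxP => a b hab; rewrite mxE.
    by rewrite (is_diag_mxP hD) // (is_diag_mxP hX) // addr0.
  by rewrite eigY; congr (_ * _); rewrite mxE.
- exact: hYX.
- rewrite (frob_gen hS eigY) (frob_gen hS (eigX hS hD hX hE)) hYX //.
Qed.
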